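(* Let $(\mathcal V,[\cdot,\cdots,\cdot],S)$ be a generalized metric $n$-Leibniz algebra, let $\mathfrak g=\mathrm{Im}\,D\subset\mathfrak{gl}(\mathcal V)$ with commutator bracket $[\cdot,\cdot]_C$, and let $\omega$ be the bilinear form on $\mathfrak g$ given by $\omega(D(u_1,\dots,u_{n-1}),D(v_1,\dots,v_{n-1}))=S([u_1,\dots,u_{n-1},v_1],v_2,\dots,v_{n-1})$. Then $(\mathfrak g,\mathcal V,\mathrm{Id})$ is a Lie triple data: $(\mathfrak g,[\cdot,\cdot]_C,\omega)$ is a metric Lie algebra and the inclusion $\mathrm{Id}:\mathfrak g\to\mathfrak{gl}(\mathcal V)$ is a faithful generalized orthogonal representation on $(\mathcal V,S)$.
   Context: All vector spaces are finite-dimensional over $\mathbb R$. An $n$-Leibniz algebra is a vector space $\mathcal V$ with an $n$-linear map $[\cdot,\cdots,\cdot]$ satisfying $[u_1,\dots,u_{n-1},[v_1,\dots,v_n]]=\sum_{i=1}^n[v_1,\dots,[u_1,\dots,u_{n-1},v_i],\dots,v_n]$. A symmetric $S\in\mathrm{Sym}^{n-1}(\mathcal V^* )$ is non-degenerate if $S(u,v_1,\dots,v_{n-2})=0$ for all $v_j$ implies $u=0$. A generalized metric $n$-Leibniz algebra is an $n$-Leibniz algebra with a symmetric non-degenerate $S\in\mathrm{Sym}^{n-1}(\mathcal V^* )$ satisfying (a) unitarity: $\sum_{i=1}^{n-1}S(v_1,\dots,[u_1,\dots,u_{n-1},v_i],\dots,v_{n-1})=0$ and (b) symmetry: $S([u_1,\dots,u_{n-1},v_1],v_2,\dots,v_{n-1})=S([v_1,\dots,v_{n-1},u_1],u_2,\dots,u_{n-1})$.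 $D(u_1,\dots,u_{n-1})\in\mathfrak{gl}(\mathcal V)$ is $u_n\mapsto[u_1,\dots,u_{n-1},u_n]$, and $\mathrm{Im}\,D$ is the linear span of these. A metric Lie algebra is a Lie algebra with a symmetric non-degenerate bilinear form $\omega$ with $\omega([x,y],z)=-\omega(y,[x,z])$. A representation $\rho:\mathfrak g\to\mathfrak{gl}(\mathcal V)$ is generalized orthogonal (w.r.t. $S$) if $\sum_{i=1}^{n-1}S(w_1,\dots,\rho(x)w_i,\dots,w_{n-1})=0$ for all $x,w_j$. A Lie triple data $(\mathfrak g,\mathcal V,\rho)$ consists of a metric Lie algebra $(\mathfrak g,[\cdot,\cdot],\omega)$, a vector space $\mathcal V$ with a symmetric non-degenerate $S\in\mathrm{Sym}^{n-1}(\mathcal V^* )$, and a faithful (injective) generalized orthogonal representation $\rho:\mathfrak g\to\mathfrak{gl}(\mathcal V)$. *)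

(* Defs.v *)
(* n-Leibniz algebras with n = k.+2 (so n >= 2),
   finite-dimensional vector spaces = vectType over a real field R. *)
From HB Require Import structures.
From mathcomp Require Import all_boot all_order all_algebra all_fingroup.
Set Implicit Arguments. Unset Strict Implicit. Unset Printing Implicit Defensive.
Import Order.TTheory GRing.Theory Num.Theory.
Local Open Scope ring_scope.

Section Defs.
Variables (R : realFieldType) (V : vectType R).

Definition upd (m : nat) (f : 'I_m -> V) (i : 'I_m) (x : V) : 'I_m -> V :=
  fun j => if j == i then x else f j.

Definition snoc (m : nat) (u : 'I_m -> V) (w : V) : 'I_m.+1 -> V :=
  fun j => match unlift ord_max j with Some j' => u j' | None => w end.

Definition tcons (m : nat) (x : V) (w : 'I_m -> V) : 'I_m.+1 -> V :=
  fun j => match unlift ord0 j with Some j' => w j' | None => x end.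

Definition multilinear (m : nat) (T : lmodType R) (F : ('I_m -> V) -> T) :=
  forall (f : 'I_m -> V) (i : 'I_m) (a : R) (x y : V),
    F (upd f i (a *: x + y)) = a *: F (upd f i x) + F (upd f i y).

Definition sym_form (m : nat) (S : ('I_m -> V) -> R) :=
  multilinear (T := R^o) S /\ forall (f : 'I_m -> V) (s : 'S_m), S (f \o s) = S f.

Definition nLeibniz (k : nat) (br : ('I_k.+2 -> V) -> V) :=
  multilinear br /\
  forall (u : 'I_k.+1 -> V) (v : 'I_k.+2 -> V),
    br (snoc u (br v)) = \sum_(i < k.+2) br (upd v i (br (snoc u (v i)))).

Definition nondeg (k : nat) (S : ('I_k.+1 -> V) -> R) :=
  forall x : V, (forall w : 'I_k -> V, S (tcons x w) = 0) -> x = 0.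

Definition gen_metric_nLeibniz (k : nat) (br : ('I_k.+2 -> V) -> V)
    (S : ('I_k.+1 -> V) -> R) :=
  [/\ nLeibniz br, sym_form S, nondeg S,
      (forall u v : 'I_k.+1 -> V,
          \sum_(i < k.+1) S (upd v i (br (snoc u (v i)))) = 0) &
      (forall u v : 'I_k.+1 -> V,
          S (upd v ord0 (br (snoc u (v ord0)))) =
          S (upd u ord0 (br (snoc v (u ord0)))))].

Definition fzero : V -> V := fun _ => 0.
Definition fadd (f g : V -> V) : V -> V := fun w => f w + g w.
Definition fscale (a : R) (f : V -> V) : V -> V := fun w => a *: f w.
Definition comm (f g : V -> V) : V -> V := fun w => f (g w) - g (f w).

Definition Dop (k : nat) (br : ('I_k.+2 -> V) -> V) (u : 'I_k.+1 -> V) : V -> V :=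
  fun w => br (snoc u w).

Inductive ImD (k : nat) (br : ('I_k.+2 -> V) -> V) : (V -> V) -> Prop :=
  | ImD_gen u : ImD br (Dop br u)
  | ImD_zero : ImD br fzero
  | ImD_add f g : ImD br f -> ImD br g -> ImD br (fadd f g)
  | ImD_scale a f : ImD br f -> ImD br (fscale a f).

Definition metric_Lie_subalg (g : (V -> V) -> Prop) (om : (V -> V) -> (V -> V) -> R) :=
  [/\
      g fzero /\ (forall x y, g x -> g y -> g (fadd x y)) /\
        (forall a x, g x -> g (fscale a x)),
      (forall x y, g x -> g y -> g (comm x y)) /\
        (forall x, g x -> comm x x = fzero) /\
        (forall x y z, g x -> g y -> g z ->
           fadd (comm x (comm y z)) (fadd (comm y (comm z x)) (comm z (comm x y)))
           = fzero),
      (forall a x y z, g x -> g y -> g z ->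
          om (fadd (fscale a x) y) z = a * om x z + om y z) /\
        (forall x y, g x -> g y -> om x y = om y x),
      (forall x, g x -> (forall y, g y -> om x y = 0) -> x = fzero) &
      (forall x y z, g x -> g y -> g z ->
          om (comm x y) z = - om y (comm x z))].

Definition gen_orth (k : nat) (g : (V -> V) -> Prop) (rho : (V -> V) -> (V -> V))
    (S : ('I_k.+1 -> V) -> R) :=
  forall x (w : 'I_k.+1 -> V), g x ->
    \sum_(i < k.+1) S (upd w i (rho x (w i))) = 0.

Definition Lie_triple_data (k : nat) (g : (V -> V) -> Prop)
    (om : (V -> V) -> (V -> V) -> R) (S : ('I_k.+1 -> V) -> R)
    (rho : (V -> V) -> (V -> V)) :=
  [/\ metric_Lie_subalg g om,
      sym_form S /\ nondeg S,
      (forall x, g x -> linear (rho x : V -> V)) /\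
        (forall a x y, g x -> g y -> rho (fadd (fscale a x) y) = fadd (fscale a (rho x)) (rho y)) /\
        (forall x y, g x -> g y -> rho (comm x y) = comm (rho x) (rho y)),
      (forall x y, g x -> g y -> rho x = rho y -> x = y) &
      gen_orth g rho S].

End Defs.

(* Main.v *)
Require Import Defs.
From HB Require Import structures.
From mathcomp Require Import all_boot all_order all_algebra all_fingroup.
From Stdlib Require Import FunctionalExtensionality ClassicalEpsilon.
Set Implicit Arguments. Unset Strict Implicit. Unset Printing Implicit Defensive.
Import Order.TTheory GRing.Theory Num.Theory.
Local Open Scope ring_scope.

Section Base.
Variables (R : realFieldType) (V : vectType R).

Lemma upd_same m (f : 'I_m -> V) i x : upd f i x i = x.
Proof. by rewrite /upd eqxx. Qed.

Lemma upd_other m (f : 'I_m -> V) i j x : j != i -> upd f i x j = f j.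
Proof. by rewrite /upd => /negbTE ->. Qed.

Lemma upd_upd m (f : 'I_m -> V) i x y : upd (upd f i x) i y = upd f i y.
Proof. apply: functional_extensionality => j; rewrite /upd; by case: (j == i). Qed.

Lemma upd_comm m (f : 'I_m -> V) i j x y : i != j ->
  upd (upd f i x) j y = upd (upd f j y) i x.
Proof.
move=> ij; apply: functional_extensionality => l; rewrite /upd.
case: eqP => [->|_]; last by [].
by rewrite eq_sym (negbTE ij).
Qed.

Lemma snoc_max m (u : 'I_m -> V) w : snoc u w ord_max = w.
Proof. by rewrite /snoc unlift_none. Qed.

Lemma widen_lift m (i : 'I_m) : widen_ord (leqnSn m) i = lift ord_max i.
Proof. by apply: val_inj => /=; rewrite /bump leqNgt ltn_ord. Qed.

Lemma snoc_widen m (u : 'I_m -> V) w i : snoc u w (widen_ord (leqnSn m) i) = u i.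
Proof. by rewrite widen_lift /snoc liftK. Qed.

Lemma upd_snoc_max m (u : 'I_m -> V) w y : upd (snoc u w) ord_max y = snoc u y.
Proof.
apply: functional_extensionality => j; rewrite /upd /snoc.
case: eqP => [->|/eqP ne]; first by rewrite unlift_none.
by case: unliftP ne => // ->; rewrite eqxx.
Qed.

Lemma upd_snoc_widen m (u : 'I_m -> V) w i y :
  upd (snoc u w) (widen_ord (leqnSn m) i) y = snoc (upd u i y) w.
Proof.
apply: functional_extensionality => j; rewrite widen_lift /upd /snoc.
case: unliftP => [j' ->|->].
  by rewrite (inj_eq (@lift_inj _ _)).
by rewrite (negbTE (neq_lift _ _)).
Qed.

Lemma tcons0 m x (w : 'I_m -> V) : tcons x w ord0 = x.
Proof. by rewrite /tcons unlift_none. Qed.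

Lemma upd_tcons0 m x (w : 'I_m -> V) y : upd (tcons x w) ord0 y = tcons y w.
Proof.
apply: functional_extensionality => j; rewrite /upd /tcons.
case: eqP => [->|/eqP ne]; first by rewrite unlift_none.
by case: unliftP ne => // ->; rewrite eqxx.
Qed.

Section ML.
Variables (m : nat) (T : lmodType R) (F : ('I_m -> V) -> T).
Hypothesis HF : multilinear F.

Lemma ml_0 f i : F (upd f i 0) = 0.
Proof.
have := HF f i (-1) 0 0; rewrite scaler0 addr0 => ->.
by rewrite scaleN1r addNr.
Qed.

Lemma ml_add f i x y : F (upd f i (x + y)) = F (upd f i x) + F (upd f i y).
Proof. by have := HF f i 1 x y; rewrite !scale1r. Qed.

Lemma ml_scale f i a x : F (upd f i (a *: x)) = a *: F (upd f i x).
Proof. by have := HF f i a x 0; rewrite !addr0 ml_0 addr0. Qed.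

Lemma ml_sum (I : Type) (r : seq I) (c : I -> R) (G : I -> V) f i :
  F (upd f i (\sum_(p <- r) c p *: G p)) = \sum_(p <- r) c p *: F (upd f i (G p)).
Proof.
elim: r => [|p r IH]; first by rewrite !big_nil ml_0.
by rewrite !big_cons HF IH.
Qed.

Lemma ml_eq0 f i : f i = 0 -> F f = 0.
Proof.
move=> fi; have -> : f = upd f i 0; last exact: ml_0.
by apply: functional_extensionality => j; rewrite /upd; case: eqP => // ->.
Qed.
End ML.
End Base.

Lemma jac (M : zmodType) (a b c d e f : M) :
  a - b - (c - d) + (c - e - (f - b) + (f - d - (a - e))) = 0.
Proof.
rewrite !opprB !addrA.
rewrite [_ - c + c]addrNK.
rewrite [LHS]addrC subrK (addrAC (a - b + d) (- e) b) (addrAC (a - b) d b) subrK.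
rewrite (addrAC (a + d) (-e) (-d)) addrK subrK addNr //.
Qed.

Section Main.
Variables (R : realFieldType) (V : vectType R) (k : nat)
    (br : ('I_k.+2 -> V) -> V) (S : ('I_k.+1 -> V) -> R).
Hypothesis H : gen_metric_nLeibniz br S.

Let Hbr : multilinear br. Proof. by case: H => [[L _]]. Qed.
Let Hleib : forall (u : 'I_k.+1 -> V) (v : 'I_k.+2 -> V),
    br (snoc u (br v)) = \sum_(i < k.+2) br (upd v i (br (snoc u (v i)))).
Proof. by case: H => [[_ L]]. Qed.
Let HS : multilinear (T := R^o) S. Proof. by case: H => _ [L _]. Qed.
Let Hnd : nondeg S. Proof. by case: H. Qed.
Let Hun : forall u v : 'I_k.+1 -> V,
          \sum_(i < k.+1) S (upd v i (br (snoc u (v i)))) = 0.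
Proof. by case: H. Qed.
Let Hsy : forall u v : 'I_k.+1 -> V,
          S (upd v ord0 (br (snoc u (v ord0)))) =
          S (upd u ord0 (br (snoc v (u ord0)))).
Proof. by case: H. Qed.

Definition rep := seq (R * ('I_k.+1 -> V)).
Definition evalrep (r : rep) : V -> V :=
  fun w => \sum_(p <- r) p.1 *: br (snoc p.2 w).
Definition Pf (f : V -> V) (v : 'I_k.+1 -> V) : R := S (upd v ord0 (f (v ord0))).
Definition pairing (f : V -> V) (r : rep) : R := \sum_(p <- r) p.1 * Pf f p.2.
Definition om (x y : V -> V) : R :=
  pairing x (epsilon (inhabits [::]) (fun r : rep => y = evalrep r)).

Lemma S_scale f i a x : S (upd f i (a *: x)) = a * S (upd f i x).
Proof. exact: (ml_scale HS). Qed.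
Lemma S_add f i x y : S (upd f i (x + y)) = S (upd f i x) + S (upd f i y).
Proof. exact: (ml_add HS). Qed.
Lemma S_sub f i x y : S (upd f i (x - y)) = S (upd f i x) - S (upd f i y).
Proof. by rewrite S_add -scaleN1r S_scale mulN1r. Qed.
Lemma S_sum (I : Type) (r : seq I) (c : I -> R) (G : I -> V) f i :
  S (upd f i (\sum_(p <- r) c p *: G p)) = \sum_(p <- r) c p * S (upd f i (G p)).
Proof. exact: (ml_sum HS). Qed.

Lemma br_snoc_lin u a x y :
  br (snoc u (a *: x + y)) = a *: br (snoc u x) + br (snoc u y).
Proof. by rewrite -(upd_snoc_max u 0) Hbr !upd_snoc_max. Qed.

Lemma br_snoc_sum (I : Type) (r : seq I) (c : I -> R) (G : I -> V) u :
  br (snoc u (\sum_(p <- r) c p *: G p)) = \sum_(p <- r) c p *: br (snoc u (G p)).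
Proof.
rewrite -(upd_snoc_max u 0) (ml_sum Hbr).
by apply: eq_bigr => p _; rewrite upd_snoc_max.
Qed.

Lemma br_upd_sum (I : Type) (r : seq I) (c : I -> R) (G : I -> V) v i w :
  br (snoc (upd v i (\sum_(p <- r) c p *: G p)) w)
  = \sum_(p <- r) c p *: br (snoc (upd v i (G p)) w).
Proof.
rewrite -upd_snoc_widen (ml_sum Hbr).
by apply: eq_bigr => p _; rewrite upd_snoc_widen.
Qed.

Lemma evalrep_lin r a x y : evalrep r (a *: x + y) = a *: evalrep r x + evalrep r y.
Proof.
rewrite /evalrep scaler_sumr -big_split /=; apply: eq_bigr => p _.
by rewrite br_snoc_lin scalerDr !scalerA mulrC.
Qed.

Lemma evalrep_sub r x y : evalrep r (x - y) = evalrep r x - evalrep r y.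
Proof.
have := evalrep_lin r (-1) y x; rewrite !scaleN1r => e.
by rewrite [x - y]addrC e addrC.
Qed.

Lemma evalrep_sum r (I : Type) (s : seq I) (c : I -> R) (G : I -> V) :
  evalrep r (\sum_(p <- s) c p *: G p) = \sum_(p <- s) c p *: evalrep r (G p).
Proof.
elim: s => [|p s IH]; last by rewrite !big_cons evalrep_lin IH.
rewrite !big_nil /evalrep big1 // => p _.
by rewrite (ml_eq0 Hbr (i := ord_max)) ?snoc_max ?scaler0.
Qed.

Lemma ev_Dop u : Dop br u = evalrep [:: (1, u)].
Proof.
by apply: functional_extensionality => w; rewrite /evalrep big_cons big_nil scale1r addr0.
Qed.

Lemma ImD_iff f : ImD br f <-> exists r, f = evalrep r.
Proof.
split.
- elim => [u|||a g _ [r ->]].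
  + by exists [:: (1, u)]; rewrite ev_Dop.
  + exists [::]; apply: functional_extensionality => w.
    by rewrite /evalrep big_nil.
  + move=> f1 f2 _ [r1 ->] _ [r2 ->]; exists (r1 ++ r2).
    by apply: functional_extensionality => w; rewrite /evalrep /fadd big_cat.
  + exists [seq (a * p.1, p.2) | p <- r].
    apply: functional_extensionality => w.
    rewrite /evalrep /fscale big_map scaler_sumr; apply: eq_bigr => p _.
    by rewrite scalerA.
- case=> r ->; elim: r => [|p r IH].
    have -> : evalrep [::] = @fzero R V.
      by apply: functional_extensionality => w; rewrite /evalrep big_nil.
    exact: ImD_zero.
  have -> : evalrep (p :: r) = fadd (fscale p.1 (Dop br p.2)) (evalrep r).
    by apply: functional_extensionality => w; rewrite /evalrep big_cons.
  by apply: ImD_add => //; apply: ImD_scale; apply: ImD_gen.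
Qed.

Lemma Pf_lin a x y v : Pf (fadd (fscale a x) y) v = a * Pf x v + Pf y v.
Proof. by rewrite /Pf /fadd /fscale S_add S_scale. Qed.

Lemma pairing_lin a x y r :
  pairing (fadd (fscale a x) y) r = a * pairing x r + pairing y r.
Proof.
rewrite /pairing mulr_sumr -big_split; apply: eq_bigr => p _.
by rewrite Pf_lin mulrDr mulrCA.
Qed.

Lemma pairing_sym r1 r2 : pairing (evalrep r1) r2 = pairing (evalrep r2) r1.
Proof.
rewrite /pairing /Pf /evalrep.
under eq_bigr do rewrite S_sum mulr_sumr.
under [RHS]eq_bigr do rewrite S_sum mulr_sumr.
rewrite exchange_big /=; apply: eq_bigr => p _; apply: eq_bigr => q _.
by rewrite Hsy mulrCA.
Qed.

Lemma om_ev f r : ImD br f -> om f (evalrep r) = pairing f r.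
Proof.
move=> /ImD_iff [r1 ->]; rewrite /om.
set r' := epsilon _ _.
have e : evalrep r = evalrep r' by apply: (epsilon_spec (inhabits [::]) (fun r' : rep => evalrep r = evalrep r')); exists r.
by rewrite pairing_sym -e pairing_sym.
Qed.

Lemma comm_DD u v :
  comm (Dop br u) (Dop br v)
  = evalrep [seq (1, upd v i (br (snoc u (v i)))) | i <- index_enum 'I_k.+1].
Proof.
apply: functional_extensionality => w.
rewrite /comm /Dop /evalrep big_map Hleib big_ord_recr /=.
rewrite snoc_max upd_snoc_max addrK; apply: eq_bigr => i _.
by rewrite snoc_widen upd_snoc_widen scale1r.
Qed.

Definition mkrep (r : rep) (v : 'I_k.+1 -> V) : rep :=
  [seq (1, upd v i (evalrep r (v i))) | i <- index_enum 'I_k.+1].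

Lemma comm_evD r v : comm (evalrep r) (Dop br v) = evalrep (mkrep r v).
Proof.
apply: functional_extensionality => w.
rewrite /comm /Dop [evalrep r w]/evalrep br_snoc_sum [evalrep r (br _)]/evalrep -sumrB.
have -> : \sum_(p <- r) (p.1 *: br (snoc p.2 (br (snoc v w))) - p.1 *: br (snoc v (br (snoc p.2 w))))
  = \sum_(p <- r) p.1 *: comm (Dop br p.2) (Dop br v) w.
  by apply: eq_bigr => p _; rewrite /comm /Dop scalerBr.
under eq_bigr do rewrite comm_DD /evalrep big_map scaler_sumr.
rewrite exchange_big /mkrep /evalrep big_map; apply: eq_bigr => i _.
by rewrite scale1r br_upd_sum; apply: eq_bigr => p _; rewrite scale1r.
Qed.

Definition scale_rep (c : R) (r : rep) : rep := [seq (c * q.1, q.2) | q <- r].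

Lemma comm_ev r1 r2 :
  comm (evalrep r1) (evalrep r2)
  = evalrep (flatten [seq scale_rep p.1 (mkrep r1 p.2) | p <- r2]).
Proof.
apply: functional_extensionality => w.
rewrite /comm [evalrep r2 w]/evalrep evalrep_sum [evalrep r2 _]/evalrep -sumrB.
rewrite [evalrep (flatten _) w]/evalrep big_flatten big_map; apply: eq_bigr => p _.
rewrite -scalerBr.
have -> : evalrep r1 (br (snoc p.2 w)) - br (snoc p.2 (evalrep r1 w))
  = comm (evalrep r1) (Dop br p.2) w by [].
rewrite comm_evD /evalrep /scale_rep /mkrep !big_map scaler_sumr.
by apply: eq_bigr => q _ /=; rewrite scalerA.
Qed.

Lemma ImD_lin f : ImD br f -> forall a x y, f (a *: x + y) = a *: f x + f y.
Proof. by move=> /ImD_iff [r ->]; apply: evalrep_lin. Qed.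

Lemma ImD_sub f : ImD br f -> forall x y, f (x - y) = f x - f y.
Proof. by move=> /ImD_iff [r ->]; apply: evalrep_sub. Qed.

Lemma go r w : \sum_(i < k.+1) S (upd w i (evalrep r (w i))) = 0.
Proof.
rewrite /evalrep; under eq_bigr do rewrite S_sum.
rewrite exchange_big /= big1 // => p _.
by rewrite -mulr_sumr Hun mulr0.
Qed.

Lemma inv_key r y v :
  Pf (comm (evalrep r) y) v + \sum_(i < k.+1) Pf y (upd v i (evalrep r (v i))) = 0.
Proof.
set x := evalrep r.
have := go r (upd v ord0 (y (v ord0))).
rewrite !big_ord_recl /Pf /comm S_sub !upd_same !upd_upd.
move=> e; rewrite -[RHS]e.
set s1 := \sum_(i < k) _; set s2 := \sum_(i < k) _.
have -> : s1 = s2.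
  apply: eq_bigr => i _.
  have ne : ord0 != lift ord0 i := neq_lift _ _.
  rewrite upd_other 1?eq_sym // upd_comm // upd_other // eq_sym.
by rewrite addrA subrK.
Qed.
Lemma ev_ImD r : ImD br (evalrep r).
Proof. by apply/ImD_iff; exists r. Qed.

Theorem main_sec : exists om : (V -> V) -> (V -> V) -> R,
    (forall u v : 'I_k.+1 -> V,
        om (Dop br u) (Dop br v) = S (upd v ord0 (br (snoc u (v ord0))))) /\
    Lie_triple_data (ImD br) om S id.
Proof.
exists om; split.
  move=> u v; rewrite (ev_Dop v) om_ev; last exact: ImD_gen.
  by rewrite /pairing big_cons big_nil mul1r addr0.
split.
- split.
  + split; first exact: ImD_zero.
    by split=> *; [apply: ImD_add | apply: ImD_scale].
  + split.
      move=> x y /ImD_iff [r1 ->] /ImD_iff [r2 ->].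
      by rewrite comm_ev; apply: ev_ImD.
    split.
      by move=> x _; apply: functional_extensionality => w; rewrite /comm subrr.
    move=> x y z hx hy hz; apply: functional_extensionality => w.
    rewrite /fadd /comm !(ImD_sub hx) !(ImD_sub hy) !(ImD_sub hz).
    exact: jac.
  + split; first by move=> a x y z _ _ _; apply: pairing_lin.
    move=> x y /ImD_iff [r1 ->] /ImD_iff [r2 ->].
    rewrite !om_ev; try exact: ev_ImD.
    exact: pairing_sym.
  + move=> x hx Hx; apply: functional_extensionality => w.
    apply: Hnd => w'.
    have := Hx _ (ImD_gen br (tcons w w')).
    rewrite ev_Dop om_ev // /pairing big_cons big_nil mul1r addr0 /Pf.
    by rewrite /= tcons0 upd_tcons0.
  + move=> x y z /ImD_iff [rx ->] /ImD_iff [ry ->] /ImD_iff [rz ->].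
    rewrite om_ev; last by rewrite comm_ev; apply: ev_ImD.
    rewrite [comm _ (evalrep rz)]comm_ev om_ev; last exact: ev_ImD.
    rewrite /pairing big_flatten big_map -sumrN; apply: eq_bigr => p _.
    rewrite /scale_rep /mkrep !big_map /=.
    under eq_bigr do rewrite mulr1.
    rewrite -mulr_sumr -mulrN; congr (_ * _).
    apply/eqP; rewrite -subr_eq0 opprK; apply/eqP; exact: inv_key.
- by case: H => _ ? ?.
- split; first by move=> x hx a u v; apply: ImD_lin.
  by split.
- by [].
- by move=> x w /ImD_iff [r ->]; apply: go.
Qed.
End Main.

Theorem mainTheorem5 (R : realFieldType) (V : vectType R) (k : nat)
    (br : ('I_k.+2 -> V) -> V) (S : ('I_k.+1 -> V) -> R) :
  gen_metric_nLeibniz br S ->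
  exists om : (V -> V) -> (V -> V) -> R,
    (forall u v : 'I_k.+1 -> V,
        om (Dop br u) (Dop br v) = S (upd v ord0 (br (snoc u (v ord0))))) /\
    Lie_triple_data (ImD br) om S id.
Proof. move=> H; exact: (main_sec H). Qed.
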